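(* Let $G$ be a discrete-time LTI system with $m$ inputs and $p$ outputs whose minimal realizations have state dimension $n$. Let $L\ge n$ and $\xi\in\mathbb{N}$, $\xi\ge1$, be integers, and set $\tilde L=\xi L+(1-\xi)n$. Suppose $\{u_k,y_k\}_{k=0}^{N-1}$ is a trajectory of $G$ and $u$ is persistently exciting of order $L+n$. Then $\{\bar u_k,\bar y_k\}_{k=0}^{\tilde L-1}$ is a trajectory of $G$ if and only if there exist $\alpha^1,\dots,\alpha^\xi\in\mathbb{R}^{N-L+1}$ such that $$\begin{bmatrix}H_L(u)&0\\0&I_{\xi-1}\otimes H_{L-n}(u_{[n,N-1]})\\ H_L(y)&0\\0&I_{\xi-1}\otimes H_{L-n}(y_{[n,N-1]})\end{bmatrix}\begin{bmatrix}\alpha^1\\ \vdots\\ \alpha^\xi\end{bmatrix}=\begin{bmatrix}\bar u_{[0,\tilde L-1]}\\ \bar y_{[0,\tilde L-1]}\end{bmatrix}$$ and, for all $i\in\{1,\dots,\xi-1\}$, $$H_n(u_{[L-n,N-1]})\alpha^i=H_n(u_{[0,N-L+n-1]})\alpha^{i+1},\qquad H_n(y_{[L-n,N-1]})\alpha^i=H_n(y_{[0,N-L+n-1]})\alpha^{i+1}.$$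
   Context: For a sequence $\{x_k\}_{k=0}^{N-1}$ with $x_k\in\mathbb{R}^d$ and $1\le L\le N$, the Hankel matrix $H_L(x)\in\mathbb{R}^{dL\times(N-L+1)}$ is the matrix whose $(i,j)$ block (block rows $i=0,\dots,L-1$, columns $j=0,\dots,N-L$) is $x_{i+j}$. For $a\le b$, $x_{[a,b]}$ denotes the stacked vector $(x_a^\top,\dots,x_b^\top)^\top$; when used as the argument of a Hankel matrix, $x_{[a,b]}$ denotes the subsequence $\{x_{a+k}\}_{k=0}^{b-a}$, so that e.g. $H_{L-n}(u_{[n,N-1]})$, $H_n(u_{[L-n,N-1]})$ and $H_n(u_{[0,N-L+n-1]})$ all have $N-L+1$ columns. $\otimes$ is the Kronecker product and $I_{\xi-1}$ the identity of size $\xi-1$ (the corresponding block is absent if $\xi=1$). A sequence $x$ with $x_k\in\mathbb{R}^d$ is persistently exciting of order $L$ if $\operatorname{rank}H_L(x)=dL$. An input-output sequence $\{u_k,y_k\}_{k=0}^{N-1}$ is a trajectory of $G$ if for a minimal realization $(A,B,C,D)$ of $G$ there exist $\bar x\in\mathbb{R}^n$ and states $\{x_k\}_{k=0}^N$ with $x_0=\bar x$, $x_{k+1}=Ax_k+Bu_k$, $y_k=Cx_k+Du_k$ for $k=0,\dots,N-1$. *)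

(* Defs.v *)
From HB Require Import structures.
From mathcomp Require Import all_boot all_order all_algebra.
Set Implicit Arguments. Unset Strict Implicit. Unset Printing Implicit Defensive.
Import Order.TTheory GRing.Theory Num.Theory.
Local Open Scope ring_scope.

(* Stacked vector x_{[a, a+len-1]} = (x_a^T, ..., x_{a+len-1}^T)^T, of size len*d.
   (mxvec is row-major: entry (i,k) of the len x d matrix goes to index i*d+k.) *)
Definition stackv (R : Type) (d : nat) (x : nat -> 'cV[R]_d) (a len : nat)
  : 'cV[R]_(len * d) :=
  (mxvec (\matrix_(i < len, k < d) x (a + i)%N k ord0))^T.

(* Hankel matrix with L block rows and K columns: block (i,j) is x_{i+j};
   i.e. column j is the stacked vector x_{[j, j+L-1]}.
   H_L(x) for a sequence of length N is hankel x L (N - L + 1). *)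
Definition hankel (R : Type) (d : nat) (x : nat -> 'cV[R]_d) (L K : nat)
  : 'M[R]_(L * d, K) :=
  \matrix_(r < L * d, j < K) stackv x j L r ord0.

Definition ctrb (R : pzRingType) (n m : nat) (A : 'M[R]_n) (B : 'M[R]_(n, m)) :=
  \mxrow_(i < n) (A ^+ i *m B).
Definition obsv (R : pzRingType) (n p : nat) (A : 'M[R]_n) (C : 'M[R]_(p, n)) :=
  \mxcol_(i < n) (C *m A ^+ i).

Definition minimal_realization (R : fieldType) (n m p : nat)
  (A : 'M[R]_n) (B : 'M[R]_(n, m)) (C : 'M[R]_(p, n)) (D : 'M[R]_(p, m)) : Prop :=
  \rank (ctrb A B) = n /\ \rank (obsv A C) = n.

Definition is_trajectory (R : pzRingType) (n m p : nat)
  (A : 'M[R]_n) (B : 'M[R]_(n, m)) (C : 'M[R]_(p, n)) (D : 'M[R]_(p, m))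
  (N : nat) (u : nat -> 'cV[R]_m) (y : nat -> 'cV[R]_p) : Prop :=
  exists x : nat -> 'cV[R]_n,
    forall k, (k < N)%N ->
      x k.+1 = A *m x k + B *m u k /\ y k = C *m x k + D *m u k.

Definition persistently_exciting (R : fieldType) (d : nat) (x : nat -> 'cV[R]_d)
  (N L : nat) : Prop :=
  \rank (hankel x L (N - L + 1)) = (L * d)%N.

(* Main.v *)
Require Import Defs.
From HB Require Import structures.
From mathcomp Require Import all_boot all_order all_algebra zify.
Set Implicit Arguments. Unset Strict Implicit. Unset Printing Implicit Defensive.
Import Order.TTheory GRing.Theory Num.Theory.
Local Open Scope ring_scope.

Section Basics.
Variable R : fieldType.

Definition comb d K (x : nat -> 'cV[R]_d) (al : 'cV[R]_K) (t : nat) : 'cV[R]_d :=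
  \sum_(j < K) al j 0 *: x (j + t)%N.

Lemma stackvE d (x : nat -> 'cV[R]_d) a len (i : 'I_len) (k : 'I_d) c :
  stackv x a len (mxvec_index i k) c = x (a + i)%N k c.
Proof. by rewrite /stackv mxE (ord1 c) mxvecE mxE. Qed.

Lemma stackv_eq d (f g : nat -> 'cV[R]_d) a b len :
  (forall i, (i < len)%N -> f (a + i)%N = g (b + i)%N) ->
  stackv f a len = stackv g b len.
Proof.
move=> H; apply/matrixP => r c; rewrite (ord1 c).
by case/mxvec_indexP: r => i k; rewrite !stackvE (H i (ltn_ord i)).
Qed.

Lemma stackv_inj d (f g : nat -> 'cV[R]_d) a b len :
  stackv f a len = stackv g b len ->
  forall i, (i < len)%N -> f (a + i)%N = g (b + i)%N.
Proof.
move=> E i hi; apply/matrixP => k c; rewrite (ord1 c).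
have := congr1 (fun M : 'cV_(len * d) => M (mxvec_index (Ordinal hi) k) ord0) E.
by rewrite !stackvE.
Qed.

Lemma hankel_mul d (x : nat -> 'cV[R]_d) L K (al : 'cV[R]_K) :
  hankel x L K *m al = stackv (comb x al) 0 L.
Proof.
apply/matrixP => r c; rewrite (ord1 c).
case/mxvec_indexP: r => i k. rewrite stackvE !mxE /comb summxE.
by apply: eq_bigr => j _; rewrite mxE stackvE mxE add0n mulrC.
Qed.

Lemma comb_shift d (x : nat -> 'cV[R]_d) K (al : 'cV[R]_K) s t :
  comb (fun k => x (s + k)%N) al t = comb x al (s + t).
Proof. by apply: eq_bigr => j _; rewrite addnCA. Qed.

Definition rstack d L (f : 'I_L -> 'rV[R]_d) : 'rV[R]_(L * d) :=
  mxvec (\matrix_(i, k) f i 0 k).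

Lemma rstack_dot d L (f : 'I_L -> 'rV[R]_d) (g : nat -> 'cV[R]_d) a :
  rstack f *m stackv g a L = \sum_(i < L) f i *m g (a + i)%N.
Proof.
apply/matrixP => i0 j0; rewrite (ord1 i0) (ord1 j0) mxE summxE.
rewrite (reindex _ (curry_mxvec_bij _ _)) /=.
rewrite [RHS](eq_bigr (fun i => \sum_(k < d) f i 0 k * g (a + i)%N k 0)); last first.
  by move=> i _; rewrite mxE.
rewrite pair_bigA /=; apply: eq_bigr => [[i k]] _ /=.
by rewrite /rstack mxvecE mxE stackvE.
Qed.

Lemma rstackK d L (w : 'rV[R]_(L * d)) : w = rstack (fun i => row i (vec_mx w)).
Proof.
rewrite /rstack -[w in LHS]vec_mxK; congr mxvec; apply/matrixP => i k.
by rewrite !mxE.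
Qed.

Lemma rstack_eq0 d L (f : 'I_L -> 'rV[R]_d) : rstack f = 0 -> forall i, f i = 0.
Proof.
move=> /eqP; rewrite /rstack mxvec_eq0 => /eqP /matrixP H i.
apply/rowP => k; have := H i k; rewrite !mxE => ->; done.
Qed.

Lemma rstack0 d L : rstack (fun _ : 'I_L => (0 : 'rV[R]_d)) = 0.
Proof. apply/eqP; rewrite /rstack mxvec_eq0; apply/eqP/matrixP => i k; by rewrite !mxE. Qed.

Lemma hankel_col d (x : nat -> 'cV[R]_d) L K (w : 'rV[R]_(L * d)) (j : 'I_K) :
  (w *m hankel x L K) 0 j = (w *m stackv x j L) 0 0.
Proof. by rewrite !mxE; apply: eq_bigr => r _; rewrite !mxE. Qed.

End Basics.

Lemma CH_coef (R : fieldType) n (A : 'M[R]_n) :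
  exists c : nat -> R, c n = 1 /\ \sum_(k < n.+1) c k *: A ^+ k = 0.
Proof.
case: n A => [|n] A.
  by exists (fun _ => 1); split => //; rewrite flatmx0.
exists (fun k => (char_poly A)`_k); split.
  have := char_poly_monic A; rewrite monicE /lead_coef size_char_poly => /eqP //.
rewrite -[RHS](Cayley_Hamilton A) -{2}[char_poly A]coefK poly_def size_char_poly linear_sum /=.
apply: eq_bigr => i _; rewrite linearZ /= rmorphXn /= horner_mx_X //.
Qed.

Section Sys.
Variables (R : fieldType) (n m : nat) (A : 'M[R]_n) (B : 'M[R]_(n, m)).

Lemma state_expand N (x : nat -> 'cV[R]_n) (u : nat -> 'cV[R]_m)
 (htr : forall k, (k < N)%N -> x k.+1 = A *m x k + B *m u k) j k :
 (j + k <= N)%N ->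
 x (j + k)%N = A ^+ k *m x j + \sum_(s < k) A ^+ (k.-1 - s) *m B *m u (j + s)%N.
Proof.
elim: k => [|k IH] hjk.
  by rewrite addn0 expr0 mul1mx big_ord0 addr0.
rewrite addnS htr; last by lia.
rewrite IH; last by lia.
rewrite big_ord_recr /= subnn expr0 mul1mx mulmxDr mulmxA exprS -addrA.
congr (_ + _); congr (_ + _).
rewrite mulmx_sumr; apply: eq_bigr => s _ /=; rewrite !mulmxA.
rewrite -[A *m _](exprS A).
have hs := ltn_ord s.
by have -> : (k - s = (k.-1 - s).+1)%N by lia.
Qed.

Lemma willems N L (x : nat -> 'cV[R]_n) (u : nat -> 'cV[R]_m)
  (htr : forall k, (k < N)%N -> x k.+1 = A *m x k + B *m u k)
  (hc : \rank (ctrb A B) = n) (hN : (L + n <= N)%N)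
  (hpe : \rank (hankel u (L + n) (N - (L + n) + 1)) = ((L + n) * m)%N)
  (xi : 'rV[R]_n) (eta : nat -> 'rV[R]_m)
  (heta : forall t, (L <= t)%N -> eta t = 0)
  (hk : forall j, (j <= N - L)%N ->
          xi *m x j + \sum_(t < L) eta t *m u (j + t)%N = 0) :
  xi = 0 /\ forall t, eta t = 0.
Proof.
have [c [cn cA]] := CH_coef A.
pose g k s : 'rV[R]_m :=
  if (s < k)%N then xi *m A ^+ (k.-1 - s) *m B else eta (s - k)%N.
pose W s := \sum_(k < n.+1) c k *: g k s.
have hg : forall j k, (k <= n)%N -> (j + k <= N - L)%N ->
   xi *m (A ^+ k *m x j) + \sum_(s < L + n) g k s *m u (j + s)%N = 0.
  move=> j k hkn hjk.
  rewrite -[RHS](hk (j + k)%N hjk) (state_expand htr); last by lia.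
  rewrite mulmxDr -addrA; congr (_ + _).
  rewrite -(big_mkord xpredT (fun s => g k s *m u (j + s)%N)).
  rewrite (@big_cat_nat _ _ _ k 0 (L + n)) //=; last by lia.
  rewrite big_mkord mulmx_sumr; congr (_ + _).
    apply: eq_bigr => s _; rewrite /g ltn_ord !mulmxA //.
  rewrite -{1}[k]add0n big_addn.
  rewrite (@big_cat_nat _ _ _ L 0 (L + n - k)) //=; last by lia.
  rewrite [X in _ + X]big1_seq ?addr0; last first.
    move=> t /andP[_]; rewrite mem_index_iota => /andP[hLt _].
    rewrite /g; have -> : (t + k < k)%N = false by lia.
    by rewrite addnK heta // mul0mx.
  rewrite big_mkord; apply: eq_bigr => t _.
  rewrite /g; have -> : (t + k < k)%N = false by lia.
  by rewrite addnK (addnC t) addnA.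
have hW : forall j, (j <= N - (L + n))%N ->
    \sum_(s < L + n) W s *m u (j + s)%N = 0.
  move=> j hj.
  have E : \sum_(s < L + n) W s *m u (j + s)%N =
      \sum_(k < n.+1) c k *: (\sum_(s < L + n) g k s *m u (j + s)%N).
    transitivity (\sum_(s < L + n) \sum_(k < n.+1) c k *: (g k s *m u (j + s)%N)).
      apply: eq_bigr => s _; rewrite /W mulmx_suml; apply: eq_bigr => k _.
      by rewrite scalemxAl.
    by rewrite exchange_big; apply: eq_bigr => k _; rewrite scaler_sumr.
  rewrite E.
  have E2 : forall k : 'I_n.+1, \sum_(s < L + n) g k s *m u (j + s)%N =
       - (xi *m (A ^+ k *m x j)).
    move=> k; apply/eqP; rewrite -addr_eq0 addrC; apply/eqP.
    apply: hg; [by have := ltn_ord k; lia | by have := ltn_ord k; lia].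
  transitivity (- \sum_(k < n.+1) c k *: (xi *m (A ^+ k *m x j))).
    by rewrite -sumrN; apply: eq_bigr => k _; rewrite E2 scalerN.
  have -> : \sum_(k < n.+1) c k *: (xi *m (A ^+ k *m x j)) =
            xi *m (\sum_(k < n.+1) c k *: A ^+ k) *m x j.
    rewrite mulmx_sumr mulmx_suml; apply: eq_bigr => k _.
    by rewrite -scalemxAr -scalemxAl mulmxA.
  by rewrite cA mulmx0 mul0mx oppr0.
have W0 : forall s, (s < L + n)%N -> W s = 0.
  have hfree : row_free (hankel u (L + n) (N - (L + n) + 1)).
    by rewrite /row_free hpe.
  pose w := rstack (fun s : 'I_(L + n) => W s).
  have : w *m hankel u (L + n) (N - (L + n) + 1) = 0.
    apply/rowP => j; rewrite hankel_col rstack_dot hW ?mxE //.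
    by have := ltn_ord j; lia.
  move/eqP; rewrite mulmx_free_eq0 // => /eqP /rstack_eq0 H s hs.
  exact: (H (Ordinal hs)).
have etaz : forall t, eta t = 0.
  have key : forall r t, (L - r <= t)%N -> eta t = 0.
    elim=> [|r IH] t ht; first by apply: heta; lia.
    have [ht'|ht'] := leqP (L - r) t; first exact: IH.
    have hs : (t + n < L + n)%N by lia.
    have := W0 _ hs; rewrite /W big_ord_recr /= cn scale1r.
    rewrite big1 ?add0r; last first.
      move=> k _; rewrite /g; have -> : (t + n < k)%N = false.
        by have := ltn_ord k; lia.
      rewrite IH ?scaler0 //; have := ltn_ord k; lia.
    by rewrite /g ltnNge leq_addl /= addnK.
  by move=> t; apply: (key L); lia.
have xiB : forall r, (r < n)%N -> xi *m A ^+ r *m B = 0.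
  elim/ltn_ind => r IH hr.
  have hs : (n.-1 - r < L + n)%N by lia.
  have := W0 _ hs; rewrite /W big_ord_recr /= cn scale1r.
  rewrite big1 ?add0r; last first.
    move=> k _; rewrite /g; case: ifP => hk'; last by rewrite etaz scaler0.
    rewrite IH ?scaler0 //; have := ltn_ord k; lia.
  rewrite /g; have -> : (n.-1 - r < n)%N by lia.
  by have -> : (n.-1 - (n.-1 - r) = r)%N by lia.
split=> //.
have hfree : row_free (ctrb A B) by rewrite /row_free hc.
apply/eqP; rewrite -(mulmx_free_eq0 _ hfree) /ctrb mul_mxrow.
have -> : \mxrow_i (xi *m (A ^+ i *m B)) = \mxrow_(i < n) (0 : 'rV[R]_m).
  by apply/eq_mxrowP => i; rewrite mulmxA xiB.
by rewrite mxrow0.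
Qed.

Lemma willems_exists N L (x : nat -> 'cV[R]_n) (u : nat -> 'cV[R]_m)
  (htr : forall k, (k < N)%N -> x k.+1 = A *m x k + B *m u k)
  (hc : \rank (ctrb A B) = n) (hN : (L + n <= N)%N)
  (hpe : \rank (hankel u (L + n) (N - (L + n) + 1)) = ((L + n) * m)%N)
  (x0 : 'cV[R]_n) (v : nat -> 'cV[R]_m) :
  exists al : 'cV[R]_(N - L + 1),
    comb x al 0 = x0 /\ forall t, (t < L)%N -> comb u al t = v t.
Proof.
pose K := (N - L + 1)%N.
pose Xm := \matrix_(i < n, j < K) x j i 0.
pose M := col_mx Xm (hankel u L K).
have hfree : row_free M.
  apply: inj_row_free => w hw.
  rewrite -[w]hsubmxK in hw *.
  move: (lsubmx w) (rsubmx w) hw => xi w2 hw.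
  pose eta t := if insub t is Some i then row (i : 'I_L) (vec_mx w2) else 0.
  have heta : forall t, (L <= t)%N -> eta t = 0.
    by move=> t ht; rewrite /eta insubF // ltnNge ht.
  have hk : forall j, (j <= N - L)%N ->
      xi *m x j + \sum_(t < L) eta t *m u (j + t)%N = 0.
    move=> j hj; have hjK : (j < K)%N by rewrite /K; lia.
    have := congr1 (fun Z : 'M[R]_(1, K) => Z 0 (Ordinal hjK)) hw.
    rewrite mul_row_col mxE hankel_col /= [X in _ = X -> _]mxE.
    rewrite {1}[w2]rstackK rstack_dot.
    move=> e; apply/matrixP => a b; rewrite (ord1 a) (ord1 b) [RHS]mxE mxE.
    rewrite -[RHS]e; congr (_ + _).
      by rewrite !mxE; apply: eq_bigr => r _; rewrite !mxE.
    by rewrite !summxE; apply: eq_bigr => i _; rewrite /eta valK.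
  have [hxi0 heta0] := willems htr hc hN hpe heta hk.
  have -> : w2 = 0.
    rewrite (rstackK w2); apply/eqP; rewrite /rstack mxvec_eq0.
    apply/eqP/matrixP => i k; rewrite !mxE.
    by have := heta0 i; rewrite /eta valK => /rowP /(_ k); rewrite !mxE.
  by rewrite hxi0 row_mx0.
have hfull : row_full M^T by rewrite /row_full mxrank_tr.
pose b := col_mx x0 (stackv v 0 L).
have /submxP [D hD] := submx_full b^T hfull.
exists D^T.
have : b = M *m D^T by rewrite -[b]trmxK hD trmx_mul trmxK.
rewrite /M mul_col_mx => /eq_col_mx [h1 h2].
split.
  rewrite h1; apply/matrixP => i c; rewrite (ord1 c) !mxE summxE.
  by apply: eq_bigr => j _; rewrite !mxE addn0 mulrC.
move=> t ht; rewrite hankel_mul in h2.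
by have := stackv_inj h2 ht; rewrite !add0n => ->.
Qed.
End Sys.

Section Sys2.
Variables (R : fieldType) (n m p : nat) (A : 'M[R]_n) (B : 'M[R]_(n, m))
  (C : 'M[R]_(p, n)) (D : 'M[R]_(p, m)).

Lemma comb_traj N L (x : nat -> 'cV[R]_n) (u : nat -> 'cV[R]_m) (y : nat -> 'cV[R]_p)
  (htraj : forall k, (k < N)%N ->
     x k.+1 = A *m x k + B *m u k /\ y k = C *m x k + D *m u k)
  (hLN : (L <= N)%N) (al : 'cV[R]_(N - L + 1)) t : (t < L)%N ->
  comb x al t.+1 = A *m comb x al t + B *m comb u al t /\
  comb y al t = C *m comb x al t + D *m comb u al t.
Proof.
move=> ht; rewrite /comb !mulmx_sumr -!big_split; split; apply: eq_bigr => j _;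
  have hj := ltn_ord j; (have [h1 h2] : _ := htraj (j + t)%N (ltac:(lia)));
  by rewrite ?[(j + t.+1)%N]addnS ?h1 ?h2 scalerDr -!scalemxAr.
Qed.

Lemma sim_eq (z z' : nat -> 'cV[R]_n) (w w' : nat -> 'cV[R]_m) a b T :
  z a = z' b ->
  (forall t, (t < T)%N -> z (a + t).+1 = A *m z (a + t)%N + B *m w (a + t)%N) ->
  (forall t, (t < T)%N -> z' (b + t).+1 = A *m z' (b + t)%N + B *m w' (b + t)%N) ->
  (forall t, (t < T)%N -> w (a + t)%N = w' (b + t)%N) ->
  forall t, (t <= T)%N -> z (a + t)%N = z' (b + t)%N.
Proof.
move=> h0 hz hz' hw; elim=> [|t IH] ht; first by rewrite !addn0.
by rewrite !addnS hz // hz' // IH ?hw // ltnW.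
Qed.

Lemma obs_eq (hobs : \rank (obsv A C) = n)
  (z z' : nat -> 'cV[R]_n) (w w' : nat -> 'cV[R]_m) a b :
  (forall t, (t < n)%N -> z (a + t).+1 = A *m z (a + t)%N + B *m w (a + t)%N) ->
  (forall t, (t < n)%N -> z' (b + t).+1 = A *m z' (b + t)%N + B *m w' (b + t)%N) ->
  (forall t, (t < n)%N -> w (a + t)%N = w' (b + t)%N) ->
  (forall t, (t < n)%N -> C *m z (a + t)%N + D *m w (a + t)%N =
                          C *m z' (b + t)%N + D *m w' (b + t)%N) ->
  z a = z' b.
Proof.
move=> hz hz' hw hy.
pose e t := z (a + t)%N - z' (b + t)%N.
have he : forall t, (t <= n)%N -> e t = A ^+ t *m e 0%N.
  elim=> [|t IH] ht; first by rewrite expr0 mul1mx.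
  rewrite /e !addnS hz // hz' // hw // opprD addrACA -mulmxBr.
  rewrite [X in _ + X]subrr addr0.
  have := IH (ltnW ht); rewrite /e => ->.
  by rewrite exprS mulmxA -(mulmxE R n).
have hCe : forall t, (t < n)%N -> C *m (A ^+ t *m e 0%N) = 0.
  move=> t ht; rewrite -(he t (ltnW ht)) /e mulmxBr.
  have := hy t ht; rewrite hw // => /addIr ->; exact: subrr.
have hfull : row_full (obsv A C) by rewrite /row_full hobs.
have : obsv A C *m e 0%N = obsv A C *m 0.
  rewrite mulmx0 /obsv mxcol_mul.
  have -> : \mxcol_i (C *m A ^+ i *m e 0%N) = \mxcol_(i < n) (0 : 'M[R]_(p, 1)).
    by apply/eq_mxcolP => i; rewrite -mulmxA hCe.
  by rewrite mxcol0.
move/(row_full_inj hfull)/eqP; rewrite /e !addn0 subr_eq0 => /eqP //.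
Qed.
End Sys2.
From Stdlib Require Import ClassicalEpsilon.
Unset Implicit Arguments.

Theorem proposition1 (R : realFieldType) (n m p : nat)
  (A : 'M[R]_n) (B : 'M[R]_(n, m)) (C : 'M[R]_(p, n)) (D : 'M[R]_(p, m))
  (hmin : minimal_realization A B C D)
  (N L xi : nat) (hLn : (n <= L)%N) (hxi : (1 <= xi)%N) (hN : (L + n <= N)%N)
  (u : nat -> 'cV[R]_m) (y : nat -> 'cV[R]_p)
  (htraj : is_trajectory A B C D N u y)
  (hpe : persistently_exciting u N (L + n))
  (ubar : nat -> 'cV[R]_m) (ybar : nat -> 'cV[R]_p) :
  let Lt := (L + (xi - 1) * (L - n))%N in
  let K := (N - L + 1)%N in
  is_trajectory A B C D Lt ubar ybar <->
  exists alpha : nat -> 'cV[R]_K,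
    [/\ hankel u L K *m alpha 0%N = stackv ubar 0 L,
        hankel y L K *m alpha 0%N = stackv ybar 0 L,
        (forall i, (1 <= i < xi)%N ->
           hankel (fun k => u (n + k)%N) (L - n) K *m alpha i
             = stackv ubar (L + (i - 1) * (L - n)) (L - n)
        /\ hankel (fun k => y (n + k)%N) (L - n) K *m alpha i
             = stackv ybar (L + (i - 1) * (L - n)) (L - n)) &
        (forall i, (i.+1 < xi)%N ->
           hankel (fun k => u (L - n + k)%N) n K *m alpha i
             = hankel u n K *m alpha i.+1
        /\ hankel (fun k => y (L - n + k)%N) n K *m alpha i
             = hankel y n K *m alpha i.+1)].
Proof.
move=> Lt K.
have [hc ho] := hmin.
case: htraj => x hx.
have htr : forall k, (k < N)%N -> x k.+1 = A *m x k + B *m u k.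
  by move=> k hk; case: (hx k hk).
have hLN : (L <= N)%N by lia.
have hLt : forall i t, (i < xi)%N -> (t < L)%N -> (i * (L - n) + t < Lt)%N.
  move=> i t hi ht; have : (i * (L - n) <= (xi - 1) * (L - n))%N.
    by apply: leq_mul => //; lia.
  rewrite /Lt; lia.
have CT := comb_traj hx hLN.
split.
- case=> xb hxb.
  have ex : forall i, exists al : 'cV[R]_K, comb x al 0 = xb (i * (L - n))%N /\
      forall t, (t < L)%N -> comb u al t = ubar (i * (L - n) + t)%N.
    by move=> i; exact: (willems_exists htr hc hN hpe).
  pose alpha i := proj1_sig (constructive_indefinite_description _ (ex i)).
  have halpha : forall i, comb x (alpha i) 0 = xb (i * (L - n))%N /\
      forall t, (t < L)%N -> comb u (alpha i) t = ubar (i * (L - n) + t)%N.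
    by move=> i; exact: (proj2_sig (constructive_indefinite_description _ (ex i))).
  have F1 : forall i t, (t < L)%N -> comb u (alpha i) t = ubar (i * (L - n) + t)%N.
    by move=> i t ht; apply: (halpha i).2.
  have F2 : forall i t, (i < xi)%N -> (t <= L)%N ->
      comb x (alpha i) t = xb (i * (L - n) + t)%N.
    move=> i t hi ht.
    suff : comb x (alpha i) (0 + t) = xb (i * (L - n) + t)%N by rewrite add0n.
    apply: (@sim_eq _ _ _ A B _ _ (comb u (alpha i)) ubar 0 _ L (halpha i).1)
      => // s hs; rewrite ?add0n.
    + exact: (CT (alpha i) s hs).1.
    + exact: (hxb _ (hLt _ _ hi hs)).1.
    + exact: F1.
  have F3 : forall i t, (i < xi)%N -> (t < L)%N ->
      comb y (alpha i) t = ybar (i * (L - n) + t)%N.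
    move=> i t hi ht; rewrite (CT (alpha i) t ht).2 F2 ?F1 ?(ltnW ht) //.
    by rewrite (hxb _ (hLt _ _ hi ht)).2.
  exists alpha; split.
  + rewrite hankel_mul; apply: stackv_eq => t ht.
    by rewrite !add0n F1 // mul0n add0n.
  + rewrite hankel_mul; apply: stackv_eq => t ht.
    by rewrite !add0n F3 // mul0n add0n.
  + move=> i /andP[h1 h2].
    have E : forall t, (L + (i - 1) * (L - n) + t = i * (L - n) + (n + t))%N.
      move=> t; case: i h1 h2 => // i _ _; rewrite subSS subn0 mulSn; lia.
    split; rewrite hankel_mul; apply: stackv_eq => t ht;
      rewrite add0n comb_shift ?F1 ?F3 ?E //; lia.
  + move=> i hi.
    have E : forall t, (i * (L - n) + (L - n + t) = i.+1 * (L - n) + t)%N.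
      by move=> t; rewrite mulSn; lia.
    split; rewrite !hankel_mul; apply: stackv_eq => t ht;
      rewrite !add0n comb_shift ?F1 ?F3 ?E //; lia.
- case=> alpha [h0u h0y hblk hcont].
  have E0u : forall t, (t < L)%N -> comb u (alpha 0%N) t = ubar t.
    move=> t ht; rewrite hankel_mul in h0u.
    by have := stackv_inj h0u ht; rewrite !add0n.
  have E0y : forall t, (t < L)%N -> comb y (alpha 0%N) t = ybar t.
    move=> t ht; rewrite hankel_mul in h0y.
    by have := stackv_inj h0y ht; rewrite !add0n.
  have Eb : forall i t, (1 <= i < xi)%N -> (t < L - n)%N ->
      comb u (alpha i) (n + t) = ubar (L + (i - 1) * (L - n) + t)%N /\
      comb y (alpha i) (n + t) = ybar (L + (i - 1) * (L - n) + t)%N.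
    move=> i t hi ht; have [h1 h2] := hblk i hi.
    rewrite hankel_mul in h1; rewrite hankel_mul in h2.
    have := stackv_inj h1 ht; have := stackv_inj h2 ht.
    by rewrite !add0n !comb_shift => -> ->.
  have Ec : forall i t, (i.+1 < xi)%N -> (t < n)%N ->
      comb u (alpha i) (L - n + t) = comb u (alpha i.+1) t /\
      comb y (alpha i) (L - n + t) = comb y (alpha i.+1) t.
    move=> i t hi ht; have [h1 h2] := hcont i hi.
    rewrite !hankel_mul in h1 h2.
    have := stackv_inj h1 ht; have := stackv_inj h2 ht.
    by rewrite !add0n !comb_shift => -> ->.
  pose xb := fix f k := if k is k'.+1 then A *m f k' + B *m ubar k'
                        else comb x (alpha 0%N) 0.
  have hxb : forall k, xb k.+1 = A *m xb k + B *m ubar k by [].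
  have SIM : forall i, comb x (alpha i) 0 = xb (i * (L - n))%N ->
      (forall t, (t < L)%N -> comb u (alpha i) t = ubar (i * (L - n) + t)%N) ->
      forall t, (t <= L)%N -> comb x (alpha i) t = xb (i * (L - n) + t)%N.
    move=> i h0 hu t ht.
    suff : comb x (alpha i) (0 + t) = xb (i * (L - n) + t)%N by rewrite add0n.
    apply: (@sim_eq _ _ _ A B _ _ (comb u (alpha i)) ubar 0 _ L h0)
      => // s hs; rewrite ?add0n.
    exact: (CT (alpha i) s hs).1.
  have P : forall i, (i < xi)%N ->
      comb x (alpha i) 0 = xb (i * (L - n))%N /\
      forall t, (t < L)%N -> comb u (alpha i) t = ubar (i * (L - n) + t)%N /\
                comb y (alpha i) t = ybar (i * (L - n) + t)%N.
    elim=> [|i IH] hi.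
      split; first by rewrite mul0n.
      by move=> t ht; rewrite mul0n add0n E0u ?E0y.
    have [IHx IHuy] := IH (ltnW hi).
    have hU : forall t, (t < L)%N ->
        comb u (alpha i.+1) t = ubar (i.+1 * (L - n) + t)%N /\
        comb y (alpha i.+1) t = ybar (i.+1 * (L - n) + t)%N.
      move=> t ht; case: (ltnP t n) => htn.
        have [hu hy] := IHuy (L - n + t)%N ltac:(lia).
        have [c1 c2] := Ec i t hi htn.
        rewrite -c1 -c2 hu hy.
        by have -> : (i * (L - n) + (L - n + t) = i.+1 * (L - n) + t)%N
          by rewrite mulSn; lia.
      have [b1 b2] := Eb i.+1 (t - n)%N ltac:(lia) ltac:(lia).
      have -> : t = (n + (t - n))%N by lia.
      rewrite b1 b2 subSS subn0.
      by have -> : (L + i * (L - n) + (t - n) = i.+1 * (L - n) + (n + (t - n)))%N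
        by rewrite mulSn; lia.
    split; last exact: hU.
    have hs := SIM i IHx (fun t ht => (IHuy t ht).1) (L - n)%N ltac:(lia).
    rewrite mulSn (addnC (L - n)%N) -hs.
    symmetry.
    apply: (@obs_eq _ _ _ _ A B C D ho _ _ (comb u (alpha i)) (comb u (alpha i.+1))
              (L - n)%N 0).
    + by move=> t ht; exact: (CT (alpha i) (L - n + t)%N ltac:(lia)).1.
    + by move=> t ht; rewrite add0n; exact: (CT (alpha i.+1) t ltac:(lia)).1.
    + by move=> t ht; rewrite add0n (Ec i t hi ht).1.
    + move=> t ht; rewrite add0n -(CT (alpha i) (L - n + t)%N ltac:(lia)).2.
      by rewrite -(CT (alpha i.+1) t ltac:(lia)).2 (Ec i t hi ht).2.
  have Q : forall i t, (i < xi)%N -> (t < L)%N ->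
      ybar (i * (L - n) + t)%N = C *m xb (i * (L - n) + t)%N + D *m ubar (i * (L - n) + t)%N.
    move=> i t hi ht; have [hx0 huy] := P i hi.
    have [hu hy] := huy t ht.
    rewrite -hy -hu -(SIM i hx0 (fun t ht => (huy t ht).1) t (ltnW ht)).
    exact: (CT (alpha i) t ht).2.
  exists xb => k hk; split => //.
  case: (ltnP k L) => hkL.
    by have := Q 0%N k hxi hkL; rewrite mul0n add0n.
  have hd : (0 < L - n)%N.
    rewrite lt0n; apply/negP => /eqP hd0; move: hk; rewrite /Lt hd0 muln0; lia.
  pose i := ((k - n) %/ (L - n))%N.
  have hi1 : (i * (L - n) <= k - n)%N by apply: leq_trunc_div.
  have hi2 : (k - n < i.+1 * (L - n))%N by apply: ltn_ceil.
  have hixi : (i < xi)%N.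
    rewrite ltn_divLR //; move: hk; rewrite /Lt.
    case: (xi) hxi => // xi' _; rewrite subSS subn0 mulSn; lia.
  have := Q i (k - i * (L - n))%N hixi ltac:(rewrite mulSn in hi2; lia).
  by have -> : (i * (L - n) + (k - i * (L - n)) = k)%N by lia.
Qed.
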